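(* Let $k:\mathcal{Z}\times\mathcal{Z}\to\mathbb{R}$ be a positive definite kernel with polynomial eigendecay on a $d$-dimensional hypercube $\mathcal{Z}$ of side length $\rho_{\mathcal{Z}}$, and let $\lambda>0$ and $T\in\mathbb{N}$. Let $$\bm{b}_k=\left\{b(z)=\left(k(z,z)-k_Z(z)^\top(K_Z+\lambda^2I)^{-1}k_Z(z)\right)^{1/2}:\ Z\subset\mathcal{Z},\ |Z|\le T\right\}$$ be the class of kernel ridge uncertainty functions. Then its $\epsilon$-covering number $\mathcal{N}_{k,\bm b}(\epsilon)$ in the sup-norm satisfies $$\log\mathcal{N}_{k,\bm b}(\epsilon)=\mathcal{O}\!\left(\left(\frac{\rho_{\mathcal{Z}}^\alpha}{\epsilon^2}\right)^{\frac2{\tilde p-1}}\left(1+\log\frac1\epsilon\right)\right).$$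
   Context: $k$ is continuous with $k(z,z)\le1$. $k_Z(z)=[k(z,z')]_{z'\in Z}$ and $K_Z=[k(z',z'')]_{z',z''\in Z}$. Let $\{(\sigma_m,\phi_m)\}$ be the Mercer eigenpairs of $k$ on $\mathcal{Z}$ (Lebesgue measure), eigenvalues decreasing. Polynomial eigendecay means: there are $C_p,\alpha>0$, $p>1$ with $\sigma_m\le C_pm^{-p}\rho_{\mathcal{Z}}^\alpha$ for all $m$, and there is $\eta\ge0$ with $m^{-p\eta}\phi_m(z)$ uniformly bounded over $m,z$; $\tilde p=p(1-2\eta)$. The $\epsilon$-covering number is the size of a smallest subset such that every element of the class is within sup-distance $\epsilon$ of some element of the subset. *)

(* Defs.v *)
From HB Require Import structures.
From mathcomp Require Import all_boot all_order all_algebra.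
From mathcomp Require Import all_classical all_reals all_analysis.
Set Implicit Arguments. Unset Strict Implicit. Unset Printing Implicit Defensive.
Import Order.TTheory GRing.Theory Num.Theory.
Import numFieldNormedType.Exports.
Local Open Scope classical_set_scope.
Local Open Scope ring_scope.

Section Defs.
Variable R : realType.

Definition hcube (d : nat) (c : nat -> R) (rho : R) : set 'rV[R]_d :=
  [set z | forall i : 'I_d, c i <= z ord0 i <= c i + rho].

Fixpoint iter_int (c : nat -> R) (rho : R) (n : nat) (F : (nat -> R) -> R) : R :=
  match n with
  | 0 => F (fun _ => 0)
  | n'.+1 => iter_int c rho n' (fun x =>
      \int[@lebesgue_measure R]_(t in `[c n', c n' + rho]) F (fun i => if i == n' then t else x i))
  end.

(* Lebesgue integral over the hypercube of a (continuous) function on R^d. *)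
Definition cube_int (d : nat) (c : nat -> R) (rho : R) (f : 'rV[R]_d -> R) : R :=
  iter_int c rho d (fun x => f (\row_(i < d) x i)).

Definition pd_kernel (d : nat) (D : set 'rV[R]_d) (k : 'rV[R]_d -> 'rV[R]_d -> R) : Prop :=
  (forall z z', D z -> D z' -> k z z' = k z' z) /\
  (forall (n : nat) (Z : 'I_n -> 'rV[R]_d) (a : 'I_n -> R), (forall i, D (Z i)) ->
     0 <= \sum_(i < n) \sum_(j < n) a i * a j * k (Z i) (Z j)).

(* Mercer eigenpairs (sigma_m, phi_m)_{m>=1} (index m here stands for m+1) of k
   on the hypercube w.r.t. Lebesgue measure: orthonormal continuous eigenfunctions
   of the integral operator, nonnegative nonincreasing eigenvalues, and the
   Mercer expansion of k. *)
Definition mercer_eigenpairs (d : nat) (c : nat -> R) (rho : R)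
    (k : 'rV[R]_d -> 'rV[R]_d -> R) (sigma : nat -> R) (phi : nat -> 'rV[R]_d -> R) : Prop :=
  let D := @hcube d c rho in
  (forall m, 0 <= sigma m) /\ (forall m, sigma m.+1 <= sigma m) /\
  (forall m, {within D, continuous (phi m)}) /\
  (forall m n, cube_int c rho (fun z => phi m z * phi n z) = (m == n)%:R) /\
  (forall m z, D z -> cube_int c rho (fun z' => k z z' * phi m z') = sigma m * phi m z) /\
  (forall z z', D z -> D z' ->
     (fun N => \sum_(m < N) sigma m * phi m z * phi m z') @ \oo --> k z z').

Definition poly_eigendecay (d : nat) (c : nat -> R) (rho : R)
    (sigma : nat -> R) (phi : nat -> 'rV[R]_d -> R) (Cp alpha p eta : R) : Prop :=
  0 < Cp /\ 0 < alpha /\ 1 < p /\ 0 <= eta /\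
  (forall m : nat, sigma m <= Cp * (m.+1%:R `^ (- p)) * rho `^ alpha) /\
  (exists B : R, forall (m : nat) z, @hcube d c rho z ->
     `| m.+1%:R `^ (- (p * eta)) * phi m z | <= B).

Definition kr_uncertainty (d n : nat) (k : 'rV[R]_d -> 'rV[R]_d -> R) (lambda : R)
    (Z : 'I_n -> 'rV[R]_d) (z : 'rV[R]_d) : R :=
  let kZ : 'cV[R]_n := \col_(i < n) k (Z i) z in
  let KZ : 'M[R]_n := \matrix_(i < n, j < n) k (Z i) (Z j) in
  Num.sqrt (k z z - ((kZ^T *m invmx (KZ + (lambda ^+ 2)%:M) *m kZ) ord0 ord0)).

Definition kr_uncertainty_class (d : nat) (D : set 'rV[R]_d)
    (k : 'rV[R]_d -> 'rV[R]_d -> R) (lambda : R) (T : nat) : set ('rV[R]_d -> R) :=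
  [set b | exists (n : nat) (Z : 'I_n -> 'rV[R]_d),
     [/\ (n <= T)%N, injective Z, (forall i, D (Z i)) & b = kr_uncertainty k lambda Z]].

Definition has_cover (d : nat) (D : set 'rV[R]_d) (F : set ('rV[R]_d -> R))
    (eps : R) (n : nat) : Prop :=
  exists s : seq ('rV[R]_d -> R),
    [/\ size s = n, (forall g, g \in s -> F g) &
        forall f, F f -> exists2 g, g \in s & forall z, D z -> `| f z - g z | <= eps].

Definition is_covering_number (d : nat) (D : set 'rV[R]_d) (F : set ('rV[R]_d -> R))
    (eps : R) (N : nat) : Prop :=
  has_cover D F eps N /\ forall n, has_cover D F eps n -> (N <= n)%N.

End Defs.
Arguments hcube {R} d c rho.

(* Main.v *)
Require Import Defs.
From HB Require Import structures.
From mathcomp Require Import all_boot all_order all_algebra.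
From mathcomp Require Import all_classical all_reals all_analysis.
From mathcomp Require Import ring lra.
Set Implicit Arguments. Unset Strict Implicit. Unset Printing Implicit Defensive.
Import Order.TTheory GRing.Theory Num.Theory.
Import numFieldNormedType.Exports.
Local Open Scope classical_set_scope.
Local Open Scope ring_scope.
Section A.
Variable R : realType.
Implicit Types a b c : R.

Definition psd2 a b c := forall s t : R, 0 <= s^+2 * a + 2 * s * t * b + t^+2 * c.

Lemma psd2_prop {a b c} : psd2 a b c -> [/\ 0 <= a, 0 <= c & b^+2 <= a * c].
Proof.
move=> H.
have ha : 0 <= a by have := H 1 0; lra.
have hc : 0 <= c by have := H 0 1; lra.
split => //.
have h1 := H b (- a). have h2 := H c (- b). have h3 := H 1 (- b).
have [a0|a0] := eqVneq a 0.
  have [c0|c0] := eqVneq c 0.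
    subst; nra.
  have cp : 0 < c by rewrite lt_def c0.
  nra.
have ap : 0 < a by rewrite lt_def a0.
nra.
Qed.

Lemma sqrt_sub_le a b c : psd2 a b c ->
  `|Num.sqrt (a + 2 * b + c) - Num.sqrt a| <= Num.sqrt c.
Proof.
move=> H; have [ha hc hb] := psd2_prop H.
have hs : 0 <= a + 2 * b + c by have := H 1 1; lra.
have sa := sqrtr_ge0 a; have sc := sqrtr_ge0 c; have ss := sqrtr_ge0 (a + 2*b+c).
have ea := sqr_sqrtr ha; have ec := sqr_sqrtr hc; have es := sqr_sqrtr hs.
have hb1 : b <= Num.sqrt a * Num.sqrt c.
  have : b ^+ 2 <= (Num.sqrt a * Num.sqrt c) ^+ 2 by rewrite exprMn ea ec.
  have := mulr_ge0 sa sc; move=> h0 h; nra.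
have hb2 : - (b + c) <= Num.sqrt c * Num.sqrt (a + 2 * b + c).
  have : (b + c) ^+ 2 <= (Num.sqrt c * Num.sqrt (a + 2 * b + c)) ^+ 2.
    rewrite exprMn ec es; nra.
  have := mulr_ge0 sc ss; move=> h0 h; nra.
rewrite ler_norml; apply/andP; split.
- suff : Num.sqrt a <= Num.sqrt (a + 2 * b + c) + Num.sqrt c by lra.
  rewrite -ler_sqr ?nnegrE; [|by []|by apply: addr_ge0].
  rewrite ea sqrrD es ec; nra.
- suff : Num.sqrt (a + 2 * b + c) <= Num.sqrt a + Num.sqrt c by lra.
  rewrite -ler_sqr ?nnegrE; [|by []|by apply: addr_ge0].
  rewrite es sqrrD ea ec; nra.
Qed.

Lemma sqrt_diff_le a b : 0 <= a -> 0 <= b ->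
  `|Num.sqrt a - Num.sqrt b| <= Num.sqrt `|a - b|.
Proof.
wlog hab : a b / b <= a.
  move=> W ha hb; have [h|h] := leP b a; first exact: W.
  by rewrite distrC (distrC a); apply: W => //; lra.
move=> ha hb.
have -> : `|a - b| = a - b by rewrite ger0_norm; lra.
have e1 := sqr_sqrtr ha; have e2 := sqr_sqrtr hb.
have e3 : Num.sqrt (a - b) ^+ 2 = a - b by rewrite sqr_sqrtr; lra.
have s1 := sqrtr_ge0 a; have s2 := sqrtr_ge0 b; have s3 := sqrtr_ge0 (a - b).
have : Num.sqrt b <= Num.sqrt a by rewrite ler_sqrt.
move=> hle; rewrite ger0_norm; last lra.
suff : Num.sqrt a <= Num.sqrt b + Num.sqrt (a - b) by lra.
rewrite -ler_sqr ?nnegrE; [|by []|by apply: addr_ge0].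
rewrite e1 sqrrD e2 e3; nra.
Qed.

Definition dot n (u v : 'cV[R]_n) := (u^T *m v) ord0 ord0.
Definition qf n (u : 'cV[R]_n) (A : 'M[R]_n) (v : 'cV[R]_n) := (u^T *m A *m v) ord0 ord0.

Lemma dotE n (u v : 'cV[R]_n) : dot u v = \sum_i u i ord0 * v i ord0.
Proof. by rewrite /dot mxE; apply: eq_bigr => i _; rewrite mxE. Qed.

Lemma qfE n (u v : 'cV[R]_n) A : qf u A v = \sum_i \sum_j u i ord0 * A i j * v j ord0.
Proof.
rewrite /qf mxE; under eq_bigr => j _ do rewrite mxE big_distrl /=.
rewrite exchange_big; apply: eq_bigr => i _; apply: eq_bigr => j _.
by rewrite !mxE.
Qed.

Lemma dotC n (u v : 'cV[R]_n) : dot u v = dot v u.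
Proof. by rewrite !dotE; apply: eq_bigr => i _; rewrite mulrC. Qed.

Lemma dot_ge0 n (u : 'cV[R]_n) : 0 <= dot u u.
Proof. by rewrite dotE; apply: sumr_ge0 => i _; rewrite -expr2 sqr_ge0. Qed.

Lemma dot_eq0 n (u : 'cV[R]_n) : dot u u = 0 -> u = 0.
Proof.
rewrite dotE => /eqP; rewrite psumr_eq0; last by move=> i _; rewrite -expr2 sqr_ge0.
move=> /allP H; apply/matrixP => i j; rewrite (ord1 j) mxE.
by have := H i (mem_index_enum _); rewrite -expr2 sqrf_eq0 => /eqP.
Qed.

Lemma dotDl n (u v w : 'cV[R]_n) : dot (u + v) w = dot u w + dot v w.
Proof. by rewrite /dot linearD /= mulmxDl mxE. Qed.
Lemma dotZl n a (u w : 'cV[R]_n) : dot (a *: u) w = a * dot u w.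
Proof. by rewrite /dot linearZ /= -scalemxAl mxE. Qed.
Lemma dotDr n (u v w : 'cV[R]_n) : dot w (u + v) = dot w u + dot w v.
Proof. by rewrite /dot mulmxDr mxE. Qed.
Lemma dotZr n a (u w : 'cV[R]_n) : dot w (a *: u) = a * dot w u.
Proof. by rewrite /dot -scalemxAr mxE. Qed.

Lemma qfDl n (u v w : 'cV[R]_n) A : qf (u + v) A w = qf u A w + qf v A w.
Proof. by rewrite /qf linearD /= !mulmxDl mxE. Qed.
Lemma qfZl n a (u w : 'cV[R]_n) A : qf (a *: u) A w = a * qf u A w.
Proof. by rewrite /qf linearZ /= -!scalemxAl mxE. Qed.
Lemma qfDr n (u v w : 'cV[R]_n) A : qf w A (u + v) = qf w A u + qf w A v.
Proof. by rewrite /qf mulmxDr mxE. Qed.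
Lemma qfZr n a (u w : 'cV[R]_n) A : qf w A (a *: u) = a * qf w A u.
Proof. by rewrite /qf -scalemxAr mxE. Qed.

Lemma qf_quad n (u v : 'cV[R]_n) A s t :
  qf (s *: u + t *: v) A (s *: u + t *: v) =
  s^+2 * qf u A u + s * t * (qf u A v + qf v A u) + t^+2 * qf v A v.
Proof. rewrite !(qfDl, qfDr, qfZl, qfZr); ring. Qed.

Lemma tr11 (A : 'M[R]_1) : A ord0 ord0 = A^T ord0 ord0.
Proof. by rewrite mxE. Qed.

Lemma qf_tr n (u v : 'cV[R]_n) A : qf u A v = qf v A^T u.
Proof. by rewrite /qf tr11 !trmx_mul trmxK mulmxA. Qed.


Lemma qfDm n (u v : 'cV[R]_n) A B : qf u (A + B) v = qf u A v + qf u B v.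
Proof. by rewrite /qf mulmxDr mulmxDl mxE. Qed.
Lemma qfBm n (u v : 'cV[R]_n) A B : qf u (A - B) v = qf u A v - qf u B v.
Proof. by rewrite /qf mulmxBr mulmxBl !mxE. Qed.
Lemma qf_scalar n (u v : 'cV[R]_n) a : qf u a%:M v = a * dot u v.
Proof. by rewrite /qf mul_mx_scalar -scalemxAl mxE. Qed.
Lemma qf_PP n m (u v : 'cV[R]_n) (P : 'M[R]_(n, m)) :
  qf u (P *m P^T) v = dot (P^T *m u) (P^T *m v).
Proof. by rewrite /qf /dot trmx_mul trmxK !mulmxA. Qed.
Lemma dot_mul n m (x : 'cV[R]_m) (P : 'M[R]_(n, m)) (c : 'cV[R]_n) :
  dot (P *m x) c = dot x (P^T *m c).
Proof. by rewrite /dot trmx_mul !mulmxA. Qed.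
Lemma dot_qf n (A : 'M[R]_n) (c : 'cV[R]_n) : dot (A *m c) c = qf c A c.
Proof. by rewrite /dot trmx_mul -/(qf c A^T c) qf_tr trmxK. Qed.

Section Key.
Variables (n M : nat) (K : 'M[R]_n) (Psi : 'M[R]_(n, M)) (rv : 'cV[R]_n) (r0 lam : R).
Hypothesis lam0 : 0 < lam.
Hypothesis Hr : forall (a : 'cV[R]_n) t,
  0 <= qf a (K - Psi *m Psi^T) a + 2 * t * dot a rv + t^+2 * r0.

Lemma Klam_unit : K + (lam^+2)%:M \in unitmx.
Proof.
rewrite unitmxE unitfE; apply/negP => /det0P [v vn0 hv].
have h0 : qf v^T (K + (lam^+2)%:M) v^T = 0.
  by rewrite /qf trmxK hv mul0mx mxE.
have h1 := Hr v^T 0.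
move: h0; rewrite qfDm qf_scalar.
have h2 : qf v^T K v^T = qf v^T (K - Psi *m Psi^T) v^T + dot (Psi^T *m v^T) (Psi^T *m v^T).
  by rewrite qfBm qf_PP; ring.
have h3 := dot_ge0 (Psi^T *m v^T); have h4 := dot_ge0 v^T.
have l2 : 0 < lam ^+ 2 by rewrite exprn_gt0.
move=> h0.
have : dot v^T v^T = 0 by nra.
move/dot_eq0 => /(congr1 trmx); rewrite trmxK trmx0 => e.
by move: vn0; rewrite e eqxx.
Qed.

Lemma key_ineq (x : 'cV[R]_M) s t :
  0 <= qf (s *: (Psi *m x) + t *: rv) (invmx (K + (lam^+2)%:M)) (s *: (Psi *m x) + t *: rv)
    <= s^+2 * dot x x + t^+2 * r0.
Proof.
set C := invmx _; set y := _ + _.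
set Kl := K + (lam^+2)%:M.
set c := C *m y.
have hc : Kl *m c = y by rewrite /c mulmxA mulmxV ?mul1mx //; exact: Klam_unit.
have eY : qf y C y = dot y c by rewrite /qf /dot /c mulmxA.
have eY2 : dot y c = qf c Kl c by rewrite -{1}hc dot_qf.
set w := Psi^T *m c.
have eY3 : qf c Kl c = qf c (K - Psi *m Psi^T) c + dot w w + lam^+2 * dot c c.
  by rewrite /Kl qfDm qf_scalar qfBm qf_PP; ring.
have eY4 : dot y c = s * dot x w + t * dot c rv.
  by rewrite /y dotDl !dotZl dot_mul (dotC rv).
have h1 := Hr ((-1) *: c) t.
rewrite qfZl qfZr dotZl in h1.
have h2 := dot_ge0 (s *: x + (-1) *: w).
rewrite !(dotDl, dotDr, dotZl, dotZr) (dotC w x) in h2.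
have h3 := Hr c 0.
have h4 := dot_ge0 c; have h5 := dot_ge0 w.
have l2 : 0 < lam ^+ 2 by rewrite exprn_gt0.
have h6 : 0 <= lam^+2 * dot c c by apply: mulr_ge0; lra.
rewrite eY; apply/andP; split; nra.
Qed.
End Key.


Definition Amat n M (K : 'M[R]_n) (Psi : 'M[R]_(n, M)) (lam : R) : 'M[R]_M :=
  1%:M - Psi^T *m invmx (K + (lam^+2)%:M) *m Psi.

Lemma qfA n M (K : 'M[R]_n) (Psi : 'M[R]_(n, M)) lam (u : 'cV[R]_M) :
  qf u (Amat K Psi lam) u = dot u u - qf (Psi *m u) (invmx (K + (lam^+2)%:M)) (Psi *m u).
Proof.
rewrite /Amat qfBm qf_scalar mul1r; congr (_ - _).
by rewrite /qf trmx_mul !mulmxA.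
Qed.

Lemma A_bounds n M (K : 'M[R]_n) (Psi : 'M[R]_(n, M)) lam :
  0 < lam -> (forall a : 'cV[R]_n, 0 <= qf a (K - Psi *m Psi^T) a) ->
  forall u : 'cV[R]_M, 0 <= qf u (Amat K Psi lam) u <= dot u u.
Proof.
move=> l0 H u.
have Hr : forall (a : 'cV[R]_n) t,
  0 <= qf a (K - Psi *m Psi^T) a + 2 * t * dot a 0 + t^+2 * 0.
  by move=> a t; rewrite /dot mulmx0 mxE; have := H a; lra.
have := key_ineq l0 Hr u 1 0.
rewrite scale1r scale0r addr0 qfA => /andP [h1 h2].
apply/andP; split; lra.
Qed.

Lemma bg_close n M (K : 'M[R]_n) (Psi : 'M[R]_(n, M)) (rv : 'cV[R]_n) r0 lam
  (x : 'cV[R]_M) :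
  0 < lam ->
  (forall (a : 'cV[R]_n) t,
     0 <= qf a (K - Psi *m Psi^T) a + 2 * t * dot a rv + t^+2 * r0) ->
  `|Num.sqrt (dot x x + r0 - qf (Psi *m x + rv) (invmx (K + (lam^+2)%:M)) (Psi *m x + rv))
     - Num.sqrt (qf x (Amat K Psi lam) x)| <= Num.sqrt r0.
Proof.
move=> l0 Hr.
set C := invmx _.
set al := dot x x - qf (Psi *m x) C (Psi *m x).
set ga := r0 - qf rv C rv.
set be := - (qf (Psi *m x) C rv + qf rv C (Psi *m x)) / 2.
have P : psd2 al be ga.
  move=> s t; have := key_ineq l0 Hr x s t; rewrite qf_quad => /andP [_ h].
  rewrite /al /ga /be; lra.
have e1 : dot x x + r0 - qf (Psi *m x + rv) C (Psi *m x + rv) = al + 2 * be + ga.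
  have := qf_quad (Psi *m x) rv C 1 1; rewrite !scale1r => ->.
  by rewrite /al /be /ga; field.
rewrite e1 qfA -/C -/al.
apply: le_trans (sqrt_sub_le P) _.
apply: ler_wsqrtr.
have := key_ineq l0 Hr x 0 1; rewrite scale0r add0r scale1r => /andP [h _].
rewrite /ga; lra.
Qed.


Lemma cvg_sumI n (u : 'I_n -> nat -> R) (l : 'I_n -> R) :
  (forall i, u i n @[n --> \oo] --> l i) ->
  (\sum_i u i N) @[N --> \oo] --> \sum_i l i.
Proof.
elim: n u l => [|n IH] u l H.
  rewrite big_ord0; under eq_cvg do rewrite big_ord0; exact: cvg_cst.
rewrite big_ord_recr /=; under eq_cvg do rewrite big_ord_recr /=.
apply: cvgD; last exact: H.
exact: (IH (fun i => u (widen_ord (leqnSn n) i)) (fun i => l (widen_ord (leqnSn n) i))).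
Qed.


Section Mercer.
Variables (d : nat) (D : set 'rV[R]_d) (k : 'rV[R]_d -> 'rV[R]_d -> R)
  (sigma : nat -> R) (phi : nat -> 'rV[R]_d -> R).
Hypothesis sig0 : forall m, 0 <= sigma m.
Hypothesis merc : forall z z', D z -> D z' ->
  (fun N => \sum_(m < N) sigma m * phi m z * phi m z') @ \oo --> k z z'.

Definition FS N p q := \sum_(m < N) sigma m * phi m p * phi m q.
Definition psiv M z : 'cV[R]_M := \col_(m < M) (Num.sqrt (sigma m) * phi m z).
Definition PsiM n M (Z : 'I_n -> 'rV[R]_d) : 'M[R]_(n, M) :=
  \matrix_(i < n, m < M) (Num.sqrt (sigma m) * phi m (Z i)).
Definition KZm n (Z : 'I_n -> 'rV[R]_d) : 'M[R]_n := \matrix_(i < n, j < n) k (Z i) (Z j).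
Definition rvv n M (Z : 'I_n -> 'rV[R]_d) z : 'cV[R]_n :=
  \col_(i < n) (k (Z i) z - FS M (Z i) z).
Definition r0f M z := k z z - FS M z z.

Lemma sqs m : Num.sqrt (sigma m) * Num.sqrt (sigma m) = sigma m.
Proof. by rewrite -expr2 sqr_sqrtr. Qed.

Lemma sqs_mul m u v :
  Num.sqrt (sigma m) * u * (Num.sqrt (sigma m) * v) = sigma m * u * v.
Proof. have := sqs m; set q := Num.sqrt _ => e; rewrite -e; ring. Qed.

Lemma Psi_psi n M Z z : PsiM M Z *m psiv M z = \col_(i < n) FS M (Z i) z.
Proof.
apply/matrixP => i j; rewrite !mxE; apply: eq_bigr => m _; rewrite !mxE.
exact: sqs_mul.
Qed.

Lemma kZ_dec n M (Z : 'I_n -> _) z :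
  \col_(i < n) k (Z i) z = PsiM M Z *m psiv M z + rvv M Z z.
Proof. by rewrite Psi_psi; apply/matrixP => i j; rewrite !mxE; ring. Qed.

Lemma kzz_dec M z : k z z = dot (psiv M z) (psiv M z) + r0f M z.
Proof.
rewrite /r0f dotE /FS.
have -> : \sum_(i < M) psiv M z i ord0 * psiv M z i ord0 =
          \sum_(m < M) sigma m * phi m z * phi m z.
  by apply: eq_bigr => m _; rewrite !mxE sqs_mul.
ring.
Qed.

Lemma PP_entry n M (Z : 'I_n -> _) i j :
  (PsiM M Z *m (PsiM M Z)^T) i j = FS M (Z i) (Z j).
Proof. by rewrite !mxE; apply: eq_bigr => m _; rewrite !mxE sqs_mul. Qed.

Definition Qf n (Z : 'I_n -> 'rV[R]_d) z (a : 'cV[R]_n) t F :=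
  \sum_i \sum_j a i ord0 * F (Z i) (Z j) * a j ord0
  + 2 * t * \sum_i a i ord0 * F (Z i) z + t^+2 * F z z.

Lemma Qid n (Z : 'I_n -> 'rV[R]_d) z (v : 'cV[R]_n) t N :
  Qf Z z v t (FS N) =
  \sum_(m < N) sigma m * (\sum_i v i ord0 * phi m (Z i) + t * phi m z)^+2.
Proof.
have e : forall m, sigma m * (\sum_i v i ord0 * phi m (Z i) + t * phi m z)^+2 =
  \sum_i \sum_j v i ord0 * (sigma m * phi m (Z i) * phi m (Z j)) * v j ord0
  + 2 * t * \sum_i v i ord0 * (sigma m * phi m (Z i) * phi m z)
  + t^+2 * (sigma m * phi m z * phi m z).
  move=> m; rewrite sqrrD expr2 big_distrlr /=.
  rewrite mulrDr mulrDr mulr_sumr; congr (_ + _ + _).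
  - apply: eq_bigr => i _; rewrite mulr_sumr; apply: eq_bigr => j _; ring.
  - rewrite -mulr_natr !mulr_suml !mulr_sumr; apply: eq_bigr => i _; ring.
  - ring.
rewrite (@eq_bigr _ _ _ 'I_N _ xpredT _ (fun m : 'I_N =>
  \sum_i \sum_j v i ord0 * (sigma m * phi m (Z i) * phi m (Z j)) * v j ord0
  + 2 * t * \sum_i v i ord0 * (sigma m * phi m (Z i) * phi m z)
  + t^+2 * (sigma m * phi m z * phi m z))); last by move=> m _; exact: e.
rewrite !big_split /= /Qf /FS; congr (_ + _ + _).
- rewrite [RHS]exchange_big; apply: eq_bigr => i _; rewrite [RHS]exchange_big.
  by apply: eq_bigr => j _; rewrite mulr_sumr mulr_suml.
- rewrite -[RHS]mulr_sumr; congr (_ * _); rewrite [RHS]exchange_big; apply: eq_bigr => i _.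
  by rewrite mulr_sumr.
- by rewrite -[RHS]mulr_sumr.
Qed.

Lemma QfB n (Z : 'I_n -> 'rV[R]_d) z (v : 'cV[R]_n) t F1 F2 :
  Qf Z z v t F1 - Qf Z z v t F2 = Qf Z z v t (fun p q => F1 p q - F2 p q).
Proof.
rewrite /Qf.
have e1 : \sum_i \sum_j v i ord0 * F1 (Z i) (Z j) * v j ord0
        - \sum_i \sum_j v i ord0 * F2 (Z i) (Z j) * v j ord0
        = \sum_i \sum_j v i ord0 * (F1 (Z i) (Z j) - F2 (Z i) (Z j)) * v j ord0.
  rewrite -sumrB; apply: eq_bigr => i _; rewrite -sumrB; apply: eq_bigr => j _; ring.
have e2 : \sum_i v i ord0 * F1 (Z i) z - \sum_i v i ord0 * F2 (Z i) z
        = \sum_i v i ord0 * (F1 (Z i) z - F2 (Z i) z).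
  rewrite -sumrB; apply: eq_bigr => i _; ring.
rewrite -e1 -e2; ring.
Qed.

Lemma Qf_r n M (Z : 'I_n -> 'rV[R]_d) z (v : 'cV[R]_n) t :
  Qf Z z v t (fun p q => k p q - FS M p q) =
  qf v (KZm Z - PsiM M Z *m (PsiM M Z)^T) v + 2 * t * dot v (rvv M Z z) + t^+2 * r0f M z.
Proof.
have -> : KZm Z - PsiM M Z *m (PsiM M Z)^T =
   \matrix_(i < n, j < n) (k (Z i) (Z j) - FS M (Z i) (Z j)).
  apply/matrixP => i j; rewrite [RHS]mxE -PP_entry.
  by rewrite !mxE.
rewrite qfE dotE /Qf /r0f; congr (_ + _ * _ + _).
- apply: eq_bigr => i _; apply: eq_bigr => j _; by rewrite mxE.
- apply: eq_bigr => i _; by rewrite mxE.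
Qed.

Lemma Qf_cvg n (Z : 'I_n -> 'rV[R]_d) z (v : 'cV[R]_n) t :
  (forall i, D (Z i)) -> D z ->
  Qf Z z v t (FS N) @[N --> \oo] --> Qf Z z v t k.
Proof.
move=> HZ Hz; rewrite /Qf /FS.
apply: cvgD; first apply: cvgD.
- apply: cvg_sumI => i /=; apply: cvg_sumI => j /=; apply: cvgMr_tmp; apply: cvgMl_tmp; exact: merc.
- apply: cvgMl_tmp; apply: cvg_sumI => i /=; apply: cvgMl_tmp; exact: merc.
- apply: cvgMl_tmp; exact: merc.
Qed.

Lemma sum_widen_le (f : nat -> R) M N : (forall m, 0 <= f m) -> (M <= N)%N ->
  \sum_(m < M) f m <= \sum_(m < N) f m.
Proof.
move=> f0 MN; rewrite -!(big_mkord xpredT) (big_cat_nat (leq0n M) MN) /=.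
by rewrite lerDl; apply: sumr_ge0 => m _.
Qed.

Lemma Hr_mercer n M (Z : 'I_n -> 'rV[R]_d) z :
  (forall i, D (Z i)) -> D z -> forall (v : 'cV[R]_n) t,
  0 <= qf v (KZm Z - PsiM M Z *m (PsiM M Z)^T) v + 2 * t * dot v (rvv M Z z) + t^+2 * r0f M z.
Proof.
move=> HZ Hz v t; rewrite -Qf_r -QfB subr_ge0.
have hc := Qf_cvg (v:=v) (t:=t) HZ Hz.
rewrite -(cvg_lim _ hc) //.
apply: limr_ge; first by apply/cvg_ex; exists (Qf Z z v t k).
exists M => // N /= hN.
rewrite !Qid; apply: (sum_widen_le (f := fun m => sigma m * (\sum_i v i ord0 * phi m (Z i) + t * phi m z)^+2)) => // m.
by apply: mulr_ge0 => //; apply: sqr_ge0.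
Qed.

Lemma b_close n M (Z : 'I_n -> 'rV[R]_d) z lam :
  (forall i, D (Z i)) -> D z -> 0 < lam ->
  `|kr_uncertainty k lam Z z
     - Num.sqrt (qf (psiv M z) (Amat (KZm Z) (PsiM M Z) lam) (psiv M z))|
    <= Num.sqrt (r0f M z).
Proof.
move=> HZ Hz l0; rewrite /kr_uncertainty /=.
rewrite (kZ_dec M Z z) (kzz_dec M z) -/(KZm Z).
exact: (bg_close (psiv M z) l0 (Hr_mercer M HZ Hz)).
Qed.

Lemma r0_ge0 M z : D z -> 0 <= r0f M z.
Proof.
move=> Hz.
have HZ : forall i : 'I_0, D ((fun i : 'I_0 => z) i) by case.
have := Hr_mercer M HZ Hz 0 1.
by rewrite qfE dotE !big_ord0 mulr0 !add0r expr1n mul1r.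
Qed.

Lemma psi_norm_le M z : D z -> dot (psiv M z) (psiv M z) <= k z z.
Proof. move=> Hz; rewrite (kzz_dec M z) lerDl; exact: r0_ge0. Qed.

Lemma r0_le M z Tb : D z ->
  (forall N, (M <= N)%N -> FS N z z - FS M z z <= Tb) -> r0f M z <= Tb.
Proof.
move=> Hz H; rewrite /r0f lerBlDl.
have hc : FS N z z @[N --> \oo] --> k z z by exact: merc.
rewrite -(cvg_lim _ hc) //.
apply: limr_le; first by apply/cvg_ex; exists (k z z).
exists M => // N /= hN.
by rewrite -lerBlDl; apply: H.
Qed.

Lemma A_bounds_mercer n M (Z : 'I_n -> 'rV[R]_d) z0 lam :
  (forall i, D (Z i)) -> D z0 -> 0 < lam ->
  forall u : 'cV[R]_M, 0 <= qf u (Amat (KZm Z) (PsiM M Z) lam) u <= dot u u.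
Proof.
move=> HZ Hz l0; apply: A_bounds => // a.
have := Hr_mercer M HZ Hz a 0.
by rewrite mulr0 mul0r addr0 expr0n /= mul0r addr0.
Qed.

End Mercer.


Section Cover.
Variables (d : nat) (D : set 'rV[R]_d) (F : set ('rV[R]_d -> R)) (eps : R).

Lemma cover_from_labels (I : finType) (L : ('rV[R]_d -> R) -> I -> Prop) :
  (forall f, F f -> exists i, L f i) ->
  (forall f g i, F f -> F g -> L f i -> L g i -> forall z, D z -> `|f z - g z| <= eps) ->
  exists n0, (n0 <= #|I|)%N /\ has_cover D F eps n0.
Proof.
move=> Hlab Hclose.
pose P i := `[< exists f, F f /\ L f i >].
pose rep i : 'rV[R]_d -> R :=
  match pselect (exists f, F f /\ L f i) with
  | left h => proj1_sig (cid h)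
  | right _ => fun _ => 0
  end.
have repP : forall i, P i -> F (rep i) /\ L (rep i) i.
  move=> i /asboolP Pi; rewrite /rep; case: pselect => // h.
  by case: (cid h).
pose s := [seq rep i | i <- enum I & P i].
exists (size s); split.
  rewrite size_map size_filter cardE; exact: count_size.
exists s; split => //.
- move=> g /mapP [i]; rewrite mem_filter => /andP [Pi _] ->.
  by case: (repP i Pi).
- move=> f Ff; have [i Li] := Hlab f Ff.
  have Pi : P i by apply/asboolP; exists f.
  exists (rep i).
    by apply: map_f; rewrite mem_filter Pi mem_enum.
  have [Fr Lr] := repP i Pi.
  exact: Hclose Ff Fr Li Lr.
Qed.

Lemma covnum_exists n0 : has_cover D F eps n0 ->
  exists N, is_covering_number D F eps N /\ (N <= n0)%N.
Proof.
move=> h.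
have ex : exists n, (fun n => `[< has_cover D F eps n >]) n by exists n0; apply/asboolP.
case: (ex_minnP ex) => N /asboolP hN hmin.
exists N; split; last by apply: hmin; apply/asboolP.
split => // n hn; apply: hmin; exact/asboolP.
Qed.
End Cover.


Section Round.
Variable M : nat.

Definition symA (A : 'M[R]_M) : 'M[R]_M := \matrix_(i, j) ((A i j + A j i) / 2).

Lemma qf_sym (x : 'cV[R]_M) A :
  qf x A x = \sum_i \sum_j x i ord0 * symA A i j * x j ord0.
Proof.
have e : \sum_i \sum_j x i ord0 * A j i * x j ord0 = qf x A x.
  rewrite qfE exchange_big; apply: eq_bigr => i _; apply: eq_bigr => j _; ring.
transitivity ((qf x A x + \sum_i \sum_j x i ord0 * A j i * x j ord0) / 2).
  by rewrite e; field.
rewrite qfE -big_split /= mulr_suml; apply: eq_bigr => i _.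
by rewrite -big_split /= mulr_suml; apply: eq_bigr => j _; rewrite mxE; field.
Qed.

Definition ev (i : 'I_M) : 'cV[R]_M := delta_mx i ord0.

Lemma qf_ev (A : 'M[R]_M) i j : qf (ev i) A (ev j) = A i j.
Proof. by rewrite /qf /ev trmx_delta -rowE -colE !mxE. Qed.

Lemma dot_ev i : dot (ev i) (ev i) = 1.
Proof.
have := qf_ev 1%:M i i; rewrite qf_scalar mul1r => ->.
by rewrite mxE eqxx.
Qed.

Lemma symA_bound A : (forall u, 0 <= qf u A u <= dot u u) ->
  forall i j, -1 <= symA A i j <= 1.
Proof.
move=> H i j.
have e1 : qf (ev i + ev j) A (ev i + ev j) = A i i + A i j + A j i + A j j.
  by rewrite !(qfDl, qfDr) !qf_ev; ring.
have e2 : qf (ev i + (-1) *: ev j) A (ev i + (-1) *: ev j) = A i i - A i j - A j i + A j j.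
  by rewrite !(qfDl, qfDr, qfZl, qfZr) !qf_ev; ring.
have d1 : dot (ev i + ev j) (ev i + ev j) <= 4.
  have := dot_ge0 (ev i + (-1) *: ev j).
  rewrite !(dotDl, dotDr, dotZl, dotZr) !dot_ev => h; lra.
have d2 : dot (ev i + (-1) *: ev j) (ev i + (-1) *: ev j) <= 4.
  have := dot_ge0 (ev i + ev j).
  rewrite !(dotDl, dotDr, dotZl, dotZr) !dot_ev => h; lra.
have := H (ev i + ev j); have := H (ev i + (-1) *: ev j).
rewrite e1 e2 mxE => /andP [h1 h2] /andP [h3 h4].
apply/andP; split; lra.
Qed.

Lemma sum_sq2 (x : 'cV[R]_M) :
  \sum_(i < M) \sum_(j < M) ((x i ord0)^+2 + (x j ord0)^+2) / 2 = M%:R * dot x x.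
Proof.
rewrite dotE.
have e : forall i : 'I_M, \sum_(j < M) ((x i ord0)^+2 + (x j ord0)^+2) / 2
   = (x i ord0)^+2 * M%:R / 2 + (\sum_(j < M) (x j ord0)^+2) / 2.
  by move=> i; rewrite -mulr_suml big_split /= sumr_const card_ord mulr_natr; field.
rewrite (eq_bigr _ (fun i _ => e i)) big_split /= sumr_const card_ord.
rewrite -mulr_suml -mulr_suml.
have -> : \sum_(i < M) x i ord0 * x i ord0 = \sum_(i < M) (x i ord0)^+2.
  by apply: eq_bigr => i _; rewrite expr2.
by set S := \sum_(i < M) _; rewrite -[(S / 2) *+ M]mulr_natr; field.
Qed.

Lemma qf_diff (x : 'cV[R]_M) A1 A2 h :
  (forall i j, `|symA A1 i j - symA A2 i j| <= h) ->
  `|qf x A1 x - qf x A2 x| <= h * (M%:R * dot x x).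
Proof.
move=> H; rewrite !qf_sym -sumrB.
apply: le_trans (ler_norm_sum _ _ _) _.
rewrite -sum_sq2 mulr_sumr; apply: ler_sum => i _.
rewrite -sumrB; apply: le_trans (ler_norm_sum _ _ _) _.
rewrite mulr_sumr; apply: ler_sum => j _.
have -> : x i ord0 * symA A1 i j * x j ord0 - x i ord0 * symA A2 i j * x j ord0
  = (symA A1 i j - symA A2 i j) * (x i ord0 * x j ord0) by ring.
rewrite normrM.
have h0 : 0 <= h by apply: le_trans (H i j).
have : `|x i ord0 * x j ord0| <= ((x i ord0)^+2 + (x j ord0)^+2) / 2.
  rewrite normrM; have := sqr_ge0 (`|x i ord0| - `|x j ord0|).
  rewrite -(real_normK (num_real (x i ord0))) -(real_normK (num_real (x j ord0))).
  move=> h1; nra.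
move=> h2; apply: ler_pM => //; exact: normr_ge0.
Qed.

Definition idx (h : R) (K : nat) (v : R) : 'I_K.+1 := inord (Num.trunc ((v + 1) / h)).

Lemma idx_close h K v w : 0 < h -> 2 / h <= K%:R -> -1 <= v <= 1 -> -1 <= w <= 1 ->
  idx h K v = idx h K w -> `|v - w| < h.
Proof.
move=> h0 hK hv hw.
have key : forall u, -1 <= u <= 1 -> (Num.trunc ((u + 1) / h) < K.+1)%N /\
   (Num.trunc ((u + 1) / h))%:R <= (u + 1) / h < (Num.trunc ((u + 1) / h)).+1%:R.
  move=> u /andP [hu1 hu2].
  have g0 : 0 <= (u + 1) / h by apply: divr_ge0; lra.
  split; last exact: truncn_itv.
  rewrite ltnS truncn_le_nat.
  apply: le_lt_trans (_ : 2 / h < K.+1%:R); last first.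
    by apply: le_lt_trans hK _; rewrite ltr_nat.
  by rewrite ler_pM2r ?invr_gt0 //; lra.
have [kv /andP [v1 v2]] := key v hv; have [kw /andP [w1 w2]] := key w hw.
move=> /(congr1 val) /=; rewrite !inordK // => e.
rewrite e in v1 v2.
have : `|(v + 1) / h - (w + 1) / h| < 1.
  rewrite ltr_norml; apply/andP; split; rewrite -natr1 in v2 w2; lra.
have -> : (v + 1) / h - (w + 1) / h = (v - w) / h by field; lra.
by rewrite normrM normfV (gtr0_norm h0) ltr_pdivrMr // mul1r.
Qed.

End Round.


Lemma powR_exp (x a : R) : 0 < x -> x `^ a = expR (a * ln x).
Proof. by move=> x0; rewrite /powR gt_eqF. Qed.

Lemma pow_tail_term (q : R) (m : nat) : 1 < q -> (1 <= m)%N ->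
  m.+1%:R `^ (- q) * (q - 1) <= m%:R `^ (1 - q) - m.+1%:R `^ (1 - q).
Proof.
move=> q1 m1.
have m0 : 0 < m%:R :> R by rewrite ltr0n.
have m10 : 0 < m.+1%:R :> R by rewrite ltr0n.
rewrite !powR_exp //.
set u := ln m%:R; set v := ln m.+1%:R.
have eu : expR u = m%:R by rewrite lnK // posrE.
have ev : expR v = m.+1%:R by rewrite lnK // posrE.
have huv : 1 + (u - v) <= m%:R / m.+1%:R by rewrite -eu -ev -expRB expR_ge1Dx.
have hvu : 1 / m.+1%:R <= v - u.
  have : m%:R / m.+1%:R = 1 - 1 / m.+1%:R :> R.
    by rewrite -natr1; field; rewrite natr1 gt_eqF.
  move=> e; rewrite e in huv; move: huv; set w := 1 / _; move=> huv; lra.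
set E := expR ((1 - q) * v).
have E0 : 0 < E by apply: expR_gt0.
have e1 : expR (- q * v) = E / m.+1%:R.
  by rewrite /E -ev -expRB; congr expR; ring.
have e2 : expR ((1 - q) * u) = E * expR ((q - 1) * (v - u)).
  by rewrite /E -expRD; congr expR; ring.
rewrite e1 e2.
have h3 := expR_ge1Dx ((q - 1) * (v - u)).
have q0 : 0 < q - 1 by lra.
have : E / m.+1%:R * (q - 1) <= E * (q - 1) * (v - u).
  have ee : E / m.+1%:R * (q - 1) = (E * (q - 1)) * (1 / m.+1%:R) by rewrite mul1r; ring.
  by rewrite ee ler_pM2l // mulr_gt0.
have h4 := ler_wpM2l (ltW E0) h3.
move=> h5; rewrite mulrDr mulr1 mulrA in h4.
move: h4 h5; set X := E / _ * _; set Y := E * (q - 1) * _; set Z := E * expR _; lra.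
Qed.

Lemma pow_tail_sum (q : R) (M N : nat) : 1 < q -> (1 <= M)%N -> (M <= N)%N ->
  \sum_(M <= m < N) m.+1%:R `^ (- q) <= M%:R `^ (1 - q) / (q - 1).
Proof.
move=> q1 M1 MN.
have q0 : 0 < q - 1 by lra.
suff : \sum_(M <= m < N) m.+1%:R `^ (- q) <= (M%:R `^ (1 - q) - N%:R `^ (1 - q)) / (q - 1).
  move=> h; apply: le_trans h _; rewrite ler_pM2r ?invr_gt0 //.
  by rewrite lerBlDr lerDl powR_ge0.
elim: N MN => [|N IH]; first by rewrite leqn0 => /eqP ->; rewrite big_geq // subrr mul0r.
rewrite leq_eqVlt => /orP [/eqP <-|]; first by rewrite big_geq // subrr mul0r.
rewrite ltnS => MN; rewrite big_nat_recr //=.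
apply: le_trans (lerD (IH MN) (lexx _)) _.
have := pow_tail_term q1 (leq_trans M1 MN).
have qi : 0 < (q - 1)^-1 by rewrite invr_gt0.
rewrite -(ler_pM2r qi) -mulrA mulfV ?gt_eqF // mulr1 => h.
have -> : (M%:R `^ (1 - q) - N.+1%:R `^ (1 - q)) / (q - 1) =
   (M%:R `^ (1 - q) - N%:R `^ (1 - q)) / (q - 1) +
   (N%:R `^ (1 - q) - N.+1%:R `^ (1 - q)) / (q - 1) by field; rewrite gt_eqF.
by rewrite lerD2l.
Qed.

Lemma term_bound (x a b s f B c : R) : 0 < x -> 0 <= s -> 0 <= c ->
  s <= c * x `^ (- b) -> `|x `^ (- a) * f| <= B ->
  s * f ^+ 2 <= c * B ^+ 2 * x `^ (- (b - 2 * a)).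
Proof.
move=> x0 s0 c0 hs hf.
have xa : 0 < x `^ a by apply: powR_gt0.
have ef : f = x `^ a * (x `^ (- a) * f).
  by rewrite mulrA powRN mulfV ?gt_eqF // mul1r.
have hf2 : f ^+ 2 <= (x `^ a) ^+ 2 * B ^+ 2.
  rewrite {1}ef exprMn ler_pM2l ?exprn_gt0 //.
  have := normr_ge0 (x `^ (- a) * f).
  rewrite -real_normK ?num_real //; move=> h; nra.
have exq : x `^ (- (b - 2 * a)) = x `^ (- b) * (x `^ a) ^+ 2.
  rewrite -powR_mulrn ?powR_ge0 // -powRrM.
  rewrite -powRD; last by rewrite (gt_eqF x0) implybT.
  by have -> : - (b - 2 * a) = - b + a * 2 by ring.
rewrite exq.
have := powR_ge0 x (- b) => pb.
have := sqr_ge0 f => f2.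
have := sqr_ge0 (x `^ a) => xa2.
have := sqr_ge0 B => B2.
apply: le_trans (_ : c * x `^ (- b) * f ^+ 2 <= _).
  by apply: ler_wpM2r.
rewrite -!mulrA; apply: ler_wpM2l => //.
apply: le_trans (ler_wpM2l pb hf2) _.
by rewrite le_eqVlt; apply/orP; left; apply/eqP; ring.
Qed.


Section Count.
Variables (d : nat) (D : set 'rV[R]_d) (k : 'rV[R]_d -> 'rV[R]_d -> R)
  (sigma : nat -> R) (phi : nat -> 'rV[R]_d -> R).
Hypothesis sig0 : forall m, 0 <= sigma m.
Hypothesis merc : forall z z', D z -> D z' ->
  (fun N => \sum_(m < N) sigma m * phi m z * phi m z') @ \oo --> k z z'.
Hypothesis hk1 : forall z, D z -> k z z <= 1.

Lemma cover_count (lam eps : R) (T M : nat) (z0 : 'rV[R]_d) :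
  D z0 -> 0 < lam -> 0 < eps -> (0 < M)%N ->
  (forall z, D z -> r0f k sigma phi M z <= eps^+2 / 16) ->
  exists N, is_covering_number D (kr_uncertainty_class D k lam T) eps N /\
    (N <= (Num.trunc (32 * M%:R / eps^+2)).+2 ^ (M * M))%N.
Proof.
move=> Dz0 l0 e0 M0 hr0.
have M0' : 0 < M%:R :> R by rewrite ltr0n.
set h := eps^+2 / (16 * M%:R).
have h0 : 0 < h by apply: divr_gt0; [rewrite exprn_gt0|apply: mulr_gt0].
set K := (Num.trunc (32 * M%:R / eps^+2)).+1.
have hK : 2 / h <= K%:R.
  have -> : 2 / h = 32 * M%:R / eps^+2.
    by rewrite /h; field; apply/andP; split; rewrite gt_eqF // ?exprn_gt0.
  apply/ltW; exact: truncnS_gt.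
pose lab n (Z : 'I_n -> 'rV[R]_d) : 'M['I_K.+1]_M :=
  \matrix_(i, j) idx h K (symA (Amat (KZm k Z) (PsiM sigma phi M Z) lam) i j).
pose L (f : 'rV[R]_d -> R) (G : 'M['I_K.+1]_M) := exists n (Z : 'I_n -> 'rV[R]_d),
  [/\ (n <= T)%N, injective Z, (forall i, D (Z i)), f = kr_uncertainty k lam Z & lab n Z = G].
have sq4 : Num.sqrt (eps^+2 / 16) = eps / 4.
  have -> : eps^+2 / 16 = (eps / 4)^+2 by field.
  by rewrite sqrtr_sqr ger0_norm // divr_ge0 // ltW.
have [n0 [hn0 hcov]] : exists n0, (n0 <= #|{: 'M['I_K.+1]_M}|)%N /\
    has_cover D (kr_uncertainty_class D k lam T) eps n0.
  apply: (cover_from_labels (L := L)).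
    move=> f [n [Z [hn hinj hD ->]]]; exists (lab n Z); exists n, Z; split => //.
  move=> f g G _ _ [n [Z [_ _ hD -> eG]]] [n' [Z' [_ _ hD' -> eG']]] z Dz.
  set x := psiv sigma phi M z.
  set A := Amat (KZm k Z) (PsiM sigma phi M Z) lam.
  set A' := Amat (KZm k Z') (PsiM sigma phi M Z') lam.
  have h1 := b_close sig0 merc M hD Dz l0.
  have h2 := b_close sig0 merc M hD' Dz l0.
  rewrite -/x -/A in h1; rewrite -/x -/A' in h2.
  have sr : Num.sqrt (r0f k sigma phi M z) <= eps / 4.
    by rewrite -sq4; apply: ler_wsqrtr; apply: hr0.
  have bA := A_bounds_mercer sig0 merc hD Dz0 l0 (M := M).
  have bA' := A_bounds_mercer sig0 merc hD' Dz0 l0 (M := M).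
  have hx : dot x x <= 1 by apply: le_trans (psi_norm_le sig0 merc M Dz) (hk1 Dz).
  have hx0 : 0 <= dot x x by apply: dot_ge0.
  have hS : forall i j, `|symA A i j - symA A' i j| <= h.
    move=> i j; apply: ltW; apply: (idx_close h0 hK (symA_bound bA i j) (symA_bound bA' i j)).
    have := congr1 (fun G : 'M['I_K.+1]_M => G i j) (etrans eG (esym eG')).
    by rewrite /lab /= !mxE.
  have h3 : `|Num.sqrt (qf x A x) - Num.sqrt (qf x A' x)| <= eps / 4.
    have q0 := bA x; have q0' := bA' x.
    case/andP: q0 => q0 _; case/andP: q0' => q0' _.
    apply: le_trans (sqrt_diff_le q0 q0') _.
    rewrite -sq4; apply: ler_wsqrtr.
    apply: le_trans (qf_diff x hS) _.
    have -> : eps^+2 / 16 = h * M%:R by rewrite /h; field; rewrite gt_eqF.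
    by apply: ler_wpM2l; [exact: ltW|rewrite ler_piMr //; exact: ltW].
  set u := kr_uncertainty k lam Z z; set u' := kr_uncertainty k lam Z' z.
  set s1 := Num.sqrt (qf x A x); set s2 := Num.sqrt (qf x A' x).
  have -> : u - u' = (u - s1) + (s1 - s2) + (s2 - u') by ring.
  apply: le_trans (ler_normD _ _) _; apply: le_trans (lerD (ler_normD _ _) (lexx _)) _.
  rewrite (distrC s2).
  have g1 : `|u - s1| <= eps / 4 by apply: le_trans h1 sr.
  have g2 : `|u' - s2| <= eps / 4 by apply: le_trans h2 sr.
  have g4 : eps / 4 + eps / 4 + eps / 4 <= eps by lra.
  exact: le_trans (lerD (lerD g1 h3) g2) g4.
have [N [hN hNn0]] := covnum_exists hcov.
exists N; split => //.
apply: leq_trans hNn0 _; apply: leq_trans hn0 _.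
by rewrite card_mx card_ord.
Qed.

End Count.

End A.

Unset Implicit Arguments.

Theorem lemma7 (R : realType) (d : nat) (c : nat -> R) (rho : R)
    (k : 'rV[R]_d -> 'rV[R]_d -> R) (lambda : R)
    (sigma : nat -> R) (phi : nat -> 'rV[R]_d -> R) (Cp alpha p eta : R) :
  (0 < d)%N -> 0 < rho ->
  pd_kernel (hcube d c rho) k ->
  {within [set zz | hcube d c rho zz.1 /\ hcube d c rho zz.2],
     continuous (fun zz : 'rV[R]_d * 'rV[R]_d => k zz.1 zz.2)} ->
  (forall z, hcube d c rho z -> k z z <= 1) ->
  mercer_eigenpairs c rho k sigma phi ->
  poly_eigendecay c rho sigma phi Cp alpha p eta ->
  1 < p * (1 - 2 * eta) ->
  0 < lambda ->
  exists C eps0 : R, 0 < C /\ 0 < eps0 /\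
    forall (T : nat) (eps : R), 0 < eps < eps0 ->
      exists N : nat,
        is_covering_number (hcube d c rho) (kr_uncertainty_class (hcube d c rho) k lambda T) eps N /\
        ln (N%:R) <= C * ((rho `^ alpha / eps ^+ 2) `^ (2 / (p * (1 - 2 * eta) - 1)))
                       * (1 + ln (1 / eps)).
Proof.
move=> hd hrho hpd hcont hk1 hmer hdec hq hlam.
move: hmer; rewrite /mercer_eigenpairs /= => -[sig0 [_ [_ [_ [_ merc]]]]].
have [Cp0 [al0 [p1 [eta0 [hsig [B hB]]]]]] := hdec.
set D := hcube d c rho.
set q := p * (1 - 2 * eta).
have q0 : 0 < q - 1 by rewrite /q; lra.
set z0 : 'rV[R]_d := \row_(i < d) c i.
have Dz0 : D z0 by move=> i; rewrite mxE lexx /= lerDl ltW.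
have B0 : 0 <= B by apply: le_trans (hB 0%N z0 Dz0); exact: normr_ge0.
set ra := rho `^ alpha.
have ra0 : 0 < ra by apply: powR_gt0.
set c0 := Cp * ra * B ^+ 2.
have c00 : 0 <= c0 by rewrite /c0; apply: mulr_ge0; [apply: mulr_ge0; lra|apply: sqr_ge0].
have term : forall m z, D z -> sigma m * phi m z ^+ 2 <= c0 * m.+1%:R `^ (- q).
  move=> m z Dz.
  have x0 : 0 < m.+1%:R :> R by rewrite ltr0n.
  have cc0 : 0 <= Cp * ra by apply: mulr_ge0; lra.
  have hs : sigma m <= Cp * ra * m.+1%:R `^ (- p) by rewrite mulrAC; apply: hsig.
  have h := term_bound x0 (sig0 m) cc0 hs (hB m z Dz).
  have e : p - 2 * (p * eta) = q by rewrite /q; ring.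
  by rewrite e in h.
have tail : forall M z, (0 < M)%N -> D z ->
    r0f k sigma phi M z <= c0 * (M%:R `^ (1 - q) / (q - 1)).
  move=> M z M0 Dz; apply: (r0_le merc Dz) => N MN.
  rewrite /FS -!(big_mkord xpredT (fun m => sigma m * phi m z * phi m z)).
  rewrite (big_cat_nat (leq0n M) MN) /= addrC addrK.
  apply: le_trans (_ : \sum_(M <= m < N) c0 * m.+1%:R `^ (- q) <= _).
    by apply: ler_sum => m _; rewrite -mulrA -expr2; apply: term.
  rewrite -mulr_sumr; apply: ler_wpM2l => //.
  exact: pow_tail_sum.
set r := 1 / (q - 1).
have r0 : 0 < r by apply: divr_gt0.
set D0 := 16 * c0 / (q - 1) + 1.
have D00 : 0 < D0.
  have : 0 <= 16 * c0 / (q - 1) by apply: divr_ge0; lra.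
  rewrite /D0; lra.
set c3 := (D0 / ra) `^ r + 1.
have c31 : 1 <= c3 by rewrite /c3 lerDr powR_ge0.
set c4 := ln 34 + `|ln c3| + `|ln ra| / (q - 1) + 2 + 2 / (q - 1).
have l34 : 0 < ln (34 : R) by apply: ln_gt0; rewrite ltr1n.
have c40 : 0 < c4.
  have : 0 <= `|ln ra| / (q - 1) by apply: divr_ge0 => //; lra.
  have : 0 <= 2 / (q - 1) by apply: divr_ge0 => //; lra.
  have := normr_ge0 (ln c3); rewrite /c4; lra.
exists (c3 ^+ 2 * c4), (Num.min (1 / 2) ra); split.
  by apply: mulr_gt0 => //; apply: exprn_gt0; lra.
split; first by rewrite lt_min; apply/andP; split => //; lra.
move=> T eps /andP [e0]; rewrite lt_min => /andP [e12 era].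
have e1 : eps < 1 by lra.
have eps2 : 0 < eps ^+ 2 by apply: exprn_gt0.
have eps21 : eps ^+ 2 <= eps by rewrite expr2 ler_piMr //; lra.
set Y := (D0 / eps ^+ 2) `^ r.
have Y0 : 0 <= Y by apply: powR_ge0.
set M := (Num.trunc Y).+1.
have M0 : (0 < M)%N by [].
have MY : Y < M%:R by apply: truncnS_gt.
have MY1 : M%:R <= Y + 1.
  by rewrite /M -natr1 lerD2r truncn_le.
have M1 : 1 <= M%:R :> R by rewrite ler1n.
have Mpos : 0 < M%:R :> R by lra.
have hr0 : forall z, D z -> r0f k sigma phi M z <= eps ^+ 2 / 16.
  move=> z Dz; apply: le_trans (tail M z M0 Dz) _.
  set P := M%:R `^ (1 - q).
  have P0 : 0 <= P by apply: powR_ge0.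
  have PM : P * M%:R `^ (q - 1) = 1.
    rewrite /P -powRD; last by apply/implyP => _; rewrite gt_eqF.
    have -> : 1 - q + (q - 1) = 0 by ring.
    by rewrite powRr0.
  have YM : D0 / eps ^+ 2 <= M%:R `^ (q - 1).
    have <- : Y `^ (q - 1) = D0 / eps ^+ 2.
      rewrite /Y -powRrM.
      have -> : r * (q - 1) = 1 by rewrite /r; field; rewrite gt_eqF.
      by rewrite powRr1 // divr_ge0 // ltW.
    by apply: ge0_ler_powR; [exact: ltW|rewrite nnegrE|rewrite nnegrE; exact: ltW|exact: ltW].
  have PD : P * D0 <= eps ^+ 2.
    have := ler_wpM2l P0 YM; rewrite PM mulrA ler_pdivrMr // mul1r; exact.
  have e : c0 * (P / (q - 1)) = (D0 - 1) * P / 16.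
    by rewrite /D0; field; rewrite gt_eqF.
  rewrite e ler_pM2r ?invr_gt0 //.
  by apply: le_trans _ PD; rewrite mulrC mulrBr mulr1 lerBlDr lerDl.
have [N [hN hNb]] := cover_count sig0 merc hk1 T Dz0 hlam e0 M0 hr0.
exists N; split => //.
set L := ln (1 / eps).
have ie1 : 1 < 1 / eps by rewrite ltr_pdivlMr // mul1r.
have L0 : 0 <= L by apply: ln_ge0; exact: ltW.
set X := (ra / eps ^+ 2) `^ r.
have rae : 1 <= ra / eps ^+ 2 by rewrite ler_pdivlMr // mul1r; lra.
have X1 : 1 <= X.
  have := ge0_ler_powR (r := r) (ltW r0) (x := 1) (y := ra / eps ^+ 2).
  rewrite powR1 => ->; rewrite ?nnegrE //; lra.
have X2 : (ra / eps ^+ 2) `^ (2 / (q - 1)) = X ^+ 2.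
  rewrite -(@powR_mulrn _ X 2) ?powR_ge0 // /X -powRrM.
  by congr (_ `^ _); rewrite /r; field; rewrite gt_eqF.
rewrite X2.
have hMX : M%:R <= c3 * X.
  have eY : Y = (D0 / ra) `^ r * X.
    rewrite /Y /X -powRM; last 2 first.
    - by apply: divr_ge0; exact: ltW.
    - by apply: divr_ge0; [exact: ltW|exact: ltW].
    by congr (_ `^ _); field; apply/andP; split; rewrite gt_eqF.
  by apply: le_trans MY1 _; rewrite eY /c3 [X in _ <= X]mulrDl mul1r lerD2l.
have RHS0 : 0 <= c3 ^+ 2 * c4 * X ^+ 2 * (1 + L).
  apply: mulr_ge0; last lra.
  apply: mulr_ge0; last by apply: exprn_ge0; lra.
  by apply: mulr_ge0; [apply: exprn_ge0; lra|exact: ltW].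
have [->|N0] := eqVneq N 0%N; first by rewrite ln0.
set Kt := (Num.trunc (32 * M%:R / eps ^+ 2)).+2.
have Kt1 : 1 <= Kt%:R :> R by rewrite ler1n.
have hN1 : ln (N%:R : R) <= (M * M)%:R * ln (Kt%:R : R).
  have hp1 : (N%:R : R) \is Num.pos by rewrite posrE ltr0n lt0n.
  have hp2 : ((Kt ^ (M * M))%:R : R) \is Num.pos by rewrite posrE ltr0n expn_gt0.
  have h : ln (N%:R : R) <= ln (Kt ^ (M * M))%:R by rewrite ler_ln // ler_nat.
  rewrite natrX lnXn ?ltr0n // in h.
  by rewrite mulr_natl.
have epsM : eps ^+ 2 <= M%:R by lra.
have hKt : Kt%:R <= 34 * M%:R / eps ^+ 2.
  set a := 32 * M%:R / eps ^+ 2.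
  have a0 : 0 <= a by apply: divr_ge0; lra.
  have ta : (Num.trunc a)%:R <= a by rewrite truncn_le.
  have h2 : 2 <= 2 * M%:R / eps ^+ 2.
    by rewrite ler_pdivlMr // -subr_ge0 -mulrBr; apply: mulr_ge0; lra.
  have -> : 34 * M%:R / eps ^+ 2 = a + 2 * M%:R / eps ^+ 2.
    by rewrite /a; field; rewrite gt_eqF.
  by rewrite /Kt -addn2 natrD; apply: lerD.
have lnKt0 : 0 <= ln (Kt%:R : R) by apply: ln_ge0.
have ie0 : 0 < 1 / eps by lra.
have lnsq : ln ((1 / eps) ^+ 2) = 2 * L by rewrite lnXn // mulr_natl.
have X0 : 0 < X by lra.
have c30 : 0 < c3 by lra.
have hln : ln (Kt%:R : R) <= c4 * (1 + L).
  have h1 : ln (Kt%:R : R) <= ln (34 * M%:R / eps ^+ 2).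
    have pk1 : (Kt%:R : R) \is Num.pos by rewrite posrE; lra.
    have pk2 : (34 * M%:R / eps ^+ 2) \is Num.pos by rewrite posrE; apply: divr_gt0; lra.
    by rewrite ler_ln.
  have e34 : 34 * M%:R / eps ^+ 2 = 34 * M%:R * (1 / eps) ^+ 2.
    by field; rewrite gt_eqF.
  have e35 : ln (34 * M%:R * (1 / eps) ^+ 2) = ln 34 + ln (M%:R : R) + 2 * L.
    rewrite lnM ?posrE ?mulr_gt0 ?exprn_gt0 ?ltr0n ?invr_gt0 //.
    by rewrite lnM ?posrE ?ltr0n // lnsq.
  rewrite e34 e35 in h1.
  have h2 : ln (M%:R : R) <= ln c3 + ln X.
    by rewrite -lnM ?posrE // ler_ln ?posrE // mulr_gt0.
  have h3 : ln X = r * (ln ra + 2 * L).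
    rewrite /X ln_powR; congr (_ * _).
    have -> : ra / eps ^+ 2 = ra * (1 / eps) ^+ 2 by field; rewrite gt_eqF.
    by rewrite lnM ?posrE ?exprn_gt0 // lnsq.
  have h4 : ln c3 <= `|ln c3| by apply: ler_norm.
  have h5 : r * ln ra <= `|ln ra| / (q - 1).
    rewrite /r mul1r mulrC ler_pM2r ?invr_gt0 //; exact: ler_norm.
  have h6 : 2 / (q - 1) = 2 * r by rewrite /r; field; rewrite gt_eqF.
  have h7 : (2 + 2 * r) * L <= c4 * L.
    apply: ler_wpM2r => //; rewrite /c4 h6.
    have := normr_ge0 (ln c3); have : 0 <= `|ln ra| / (q - 1) by apply: divr_ge0 => //; lra.
    lra.
  have h8 : ln 34 + `|ln c3| + `|ln ra| / (q - 1) <= c4.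
    rewrite /c4 h6; have : 0 <= r by lra. lra.
  have er : r * (ln ra + 2 * L) = r * ln ra + 2 * (r * L) by ring.
  rewrite h3 er in h2.
  rewrite mulrDl -mulrA in h7.
  rewrite mulrDr mulr1.
  move: h1 h2 h4 h5 h7 h8.
  set A1 := ln (34 : R); set A2 := ln (M%:R : R); set A3 := ln c3; set A4 := `|ln c3|.
  set A5 := r * ln ra; set A6 := `|ln ra| / (q - 1); set A7 := c4 * L; set A8 := ln (Kt%:R : R).
  set A9 := r * L.
  move=> *; lra.
have hMM : (M * M)%:R <= (c3 * X) * (c3 * X).
  rewrite natrM; apply: ler_pM => //; lra.
apply: le_trans hN1 _.
apply: le_trans (ler_pM _ lnKt0 hMM hln) _; first by rewrite natrM mulr_ge0.
by rewrite le_eqVlt; apply/orP; left; apply/eqP; ring.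
Qed.
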